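(* Let $p\ge5$ be a prime. Then $H^1(\mathrm{Sym}(p),X_{\{2\}})=0$, and $H^1(\mathrm{Sym}(p),D_{\{q\}})=0$ for every odd prime $q$.
   Context: $\mathrm{Sym}(p)$ is identified with the group of $p\times p$ permutation matrices (via $\alpha\mapsto[\delta_{i\alpha,j}]_{i,j}$) and acts by conjugation on the group $\mathrm{D}(p,\mathbb{C})$ of invertible diagonal matrices. $D$ is the torsion subgroup of $\mathrm{D}(p,\mathbb{C})$ and $D_{\{q\}}$ its subgroup of elements of $q$-power order; $X=\mathrm{SL}(p,\mathbb{C})\cap\mathrm{D}(p,\mathbb{C})$ and $X_{\{2\}}$ is its subgroup of elements of $2$-power order. These are regarded as $\mathrm{Sym}(p)$-modules. *)

(* Defs.v *)
(* Complex numbers are modelled by algC (algebraic complex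
   numbers): every torsion element of C^* is a root of unity, hence lies in
   algC, so the torsion modules D_{q}, X_{2} are literally the same. *)
From mathcomp Require Import all_boot all_order all_algebra all_fingroup all_field.
Set Implicit Arguments. Unset Strict Implicit. Unset Printing Implicit Defensive.
Import GRing.Theory.
Local Open Scope ring_scope.

(* Sym(p) = 'S_p acts on p x p matrices via the permutation matrices
   perm_mx s (entry (i,j) = [s i == j] = delta_{i alpha, j}), by (right)
   conjugation  x^s = P_s^{-1} x P_s. *)
Definition conjP (p : nat) (s : 'S_p) (x : 'M[algC]_p) : 'M[algC]_p :=
  invmx (perm_mx s) *m x *m perm_mx s.

Definition Dq (p q : nat) (x : 'M[algC]_p) : Prop :=
  is_diag_mx x /\ exists k : nat, forall i : 'I_p, x i i ^+ (q ^ k) = 1.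

Definition X2 (p : nat) (x : 'M[algC]_p) : Prop :=
  is_diag_mx x /\ \det x = 1 /\ exists k : nat, forall i : 'I_p, x i i ^+ (2 ^ k) = 1.

Definition cocycle (p : nat) (M : 'M[algC]_p -> Prop) (f : 'S_p -> 'M[algC]_p) : Prop :=
  (forall g, M (f g)) /\ forall g h, f (g * h)%g = conjP h (f g) *m f h.

Definition coboundary (p : nat) (M : 'M[algC]_p -> Prop) (f : 'S_p -> 'M[algC]_p) : Prop :=
  exists2 m, M m & forall g, f g = invmx m *m conjP g m.

Definition H1_trivial (p : nat) (M : 'M[algC]_p -> Prop) : Prop :=
  forall f : 'S_p -> 'M[algC]_p, cocycle M f -> coboundary M f.

(* Main.v *)
Require Import Defs.
From mathcomp Require Import all_boot all_order all_algebra all_fingroup all_field.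
From mathcomp Require Import ring.
Set Implicit Arguments. Unset Strict Implicit. Unset Printing Implicit Defensive.
Import GRing.Theory.
Local Open Scope ring_scope.
Section Core.
Variables (p : nat) (z : 'I_p) (F : 'S_p -> 'I_p -> algC).
Hypothesis hcoc : forall g h i, F (g * h)%g i = F g ((h^-1)%g i) * F h i.
Hypothesis hnz : forall g i, F g i != 0.
Hypothesis htr : forall a b, a != z -> b != z -> F (tperm a b) z = 1.

Let m j := F (tperm z j) z.
Let C g := forall i, F g i * m i = m ((g^-1)%g i).

Lemma F1 i : F 1%g i = 1.
Proof.
apply: (mulIf (hnz 1%g i)); rewrite mul1r.
by have := hcoc 1%g 1%g i; rewrite mulg1 invg1 perm1.
Qed.

Lemma Fss a b i : F (tperm a b) (tperm a b i) * F (tperm a b) i = 1.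
Proof.
have E : tperm a b i = ((tperm a b)^-1)%g i by rewrite tpermV.
by rewrite [X in F _ X]E -hcoc tperm2 F1.
Qed.

Lemma C1 : C 1%g.
Proof. by move=> i; rewrite F1 mul1r invg1 perm1. Qed.

Lemma Cmul g h : C g -> C h -> C (g * h)%g.
Proof.
move=> Cg Ch i; rewrite hcoc -mulrA Ch Cg invMg permM.
done.
Qed.

Lemma m0 : m z = 1.
Proof. by rewrite /m tperm1 F1. Qed.

Lemma Ctp0 b : C (tperm z b).
Proof.
have [->|nbz] := eqVneq b z; first by rewrite tperm1; exact: C1.
move=> i; rewrite tpermV.
have [->|niz] := eqVneq i z.
  by rewrite m0 mulr1 tpermL.
have [->|nib] := eqVneq i b.
  by rewrite tpermR m0 /m mulrC -[X in F _ X * _](tpermR z b) Fss.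
rewrite tpermD; [|by rewrite eq_sym|by rewrite eq_sym].
suff -> : F (tperm z b) i = 1 by rewrite mul1r.
have -> : tperm z b = (tperm z i * tperm i b * tperm z i)%g.
  have := tpermJ i b (tperm z i); rewrite /conjg tpermV tpermR tpermD //.
    by move=> <-; rewrite mulgA.
  by rewrite eq_sym.
rewrite hcoc tpermV tpermR hcoc tpermV tpermD // (htr niz nbz) mulr1.
by rewrite -[X in F _ X * _](tpermR z i) Fss.
Qed.

Lemma Ctp a b : C (tperm a b).
Proof.
have [->|naz] := eqVneq a z; first exact: Ctp0.
have [->|nbz] := eqVneq b z; first by rewrite tpermC; exact: Ctp0.
have [->|nab] := eqVneq a b; first by rewrite tperm1; exact: C1.
have -> : tperm a b = (tperm z a * tperm z b * tperm z a)%g.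
  have := tpermJ z b (tperm z a); rewrite /conjg tpermV tpermL tpermD //.
    by move=> <-; rewrite mulgA.
  by rewrite eq_sym.
by apply: Cmul; [apply: Cmul|]; apply: Ctp0.
Qed.

Lemma Call g : C g.
Proof.
have [ts -> _] := prod_tpermP g.
elim: ts => [|t ts IH]; first by rewrite big_nil; exact: C1.
by rewrite big_cons; apply: Cmul => //; apply: Ctp.
Qed.

End Core.
Lemma invmx_perm p (g : 'S_p) : invmx (perm_mx g : 'M[algC]_p) = perm_mx (g^-1)%g.
Proof.
have E : perm_mx g *m perm_mx (g^-1)%g = 1%:M :> 'M[algC]_p.
  by rewrite -perm_mxM mulgV perm_mx1.
have [u _] := mulmx1_unit E.
by rewrite -[RHS](@mul1mx algC) -(mulVmx u) -mulmxA E mulmx1.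
Qed.

Lemma conjPE p (g : 'S_p) (x : 'M[algC]_p) i j :
  conjP g x i j = x ((g^-1)%g i) ((g^-1)%g j).
Proof.
rewrite /conjP invmx_perm -row_permE.
have -> : perm_mx g = perm_mx ((g^-1)^-1)%g :> 'M[algC]_p by rewrite invgK.
by rewrite -col_permE !mxE.
Qed.

Lemma diagE p (x : 'M[algC]_p) : is_diag_mx x -> x = diag_mx (\row_k x k k).
Proof.
move/is_diag_mxP => H; apply/matrixP => i j; rewrite !mxE.
by case: (eqVneq i j) => [->|nij]; rewrite ?mulr1n // mulr0n H.
Qed.

Lemma coc_entry p (f : 'S_p -> 'M[algC]_p) (hd : forall g, is_diag_mx (f g))
  (hc : forall g h, f (g * h)%g = conjP h (f g) *m f h) g h i :
  f (g * h)%g i i = f g ((h^-1)%g i) ((h^-1)%g i) * f h i i.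
Proof.
by rewrite hc {1}[f h]diagE // mul_mx_diag mxE conjPE mxE.
Qed.

Lemma cob_main p (z : 'I_p) (f : 'S_p -> 'M[algC]_p) (hd : forall g, is_diag_mx (f g))
  (hc : forall g h, f (g * h)%g = conjP h (f g) *m f h)
  (hnz : forall g i, f g i i != 0)
  (htr : forall a b, a != z -> b != z -> f (tperm a b) z z = 1)
  (c : algC) (hc0 : c != 0) g :
  f g = invmx (diag_mx (\row_j (c * f (tperm z j) z z)))
        *m conjP g (diag_mx (\row_j (c * f (tperm z j) z z))).
Proof.
set d := \row_j _.
have dnz j : d 0 j != 0 by rewrite mxE mulf_neq0.
have E : diag_mx d *m diag_mx (\row_j (d 0 j)^-1) = 1%:M.
  apply/matrixP => i j; rewrite mul_diag_mx !mxE.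
  by case: eqVneq => [->|_]; rewrite ?mulr1n ?mulr0n ?mulr0 // mulfV // mulf_neq0.
have [u _] := mulmx1_unit E.
have -> : invmx (diag_mx d) = diag_mx (\row_j (d 0 j)^-1).
  by rewrite -[RHS](@mul1mx algC) -(mulVmx u) -mulmxA E mulmx1.
have CC := Call (F := fun g i => f g i i) (coc_entry hd hc) hnz htr.
apply/matrixP => i j; rewrite mul_diag_mx mxE conjPE !mxE.
case: (eqVneq i j) => [<-|nij].
  rewrite eqxx mulr1n -(CC g i).
  have := hnz (tperm z i) z; move: (f g i i) (f (tperm z i) z z) => x y ny.
  by rewrite invfM; field; apply/andP.
have /negPf -> : (g^-1)%g i != (g^-1)%g j by rewrite (inj_eq perm_inj).
by rewrite mulr0n mulr0; move/is_diag_mxP: (hd g) => -> //.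
Qed.


Lemma oddpow (x : algC) n : x ^+ 2 = 1 -> odd n -> x ^+ n = 1 -> x = 1.
Proof.
move=> x2 on; rewrite -(odd_double_half n) on -mul2n exprD exprM x2 expr1n.
by rewrite expr1 mulr1.
Qed.

Lemma pow_mono (x : algC) n k K : x ^+ (n ^ k) = 1 -> (k <= K)%N -> x ^+ (n ^ K) = 1.
Proof.
by move=> h kK; rewrite -(subnKC kK) expnD exprM h expr1n.
Qed.

Lemma exp_common p n (y : 'I_p -> algC) :
  (forall j, exists k, y j ^+ (n ^ k) = 1) -> exists K, forall j, y j ^+ (n ^ K) = 1.
Proof.
case/fin_all_exists => kf hk; exists (\sum_j kf j)%N => j.
apply: (pow_mono (hk j)); by rewrite (bigD1 j) //= leq_addr.
Qed.

Lemma nz_of_pow (x : algC) n k : (0 < n)%N -> x ^+ (n ^ k) = 1 -> x != 0.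
Proof.
move=> n0 h; apply/eqP => x0; move: h; rewrite x0 expr0n expn_eq0.
by rewrite eqn0Ngt n0 /= => /eqP; rewrite eq_sym oner_eq0.
Qed.

Section Sq.
Variables (p : nat) (F : 'S_p -> 'I_p -> algC).
Hypothesis hcoc : forall g h i, F (g * h)%g i = F g ((h^-1)%g i) * F h i.
Hypothesis hnz : forall g i, F g i != 0.

Lemma sq1 z a b : a != z -> b != z -> F (tperm a b) z ^+ 2 = 1.
Proof.
move=> az bz; have := hcoc (tperm a b) (tperm a b) z.
by rewrite tperm2 (F1 hcoc hnz) tpermV tpermD // expr2 => <-.
Qed.

Lemma conjl z a b c : a != z -> b != z -> c != z -> a != c -> b != c ->
  F (tperm a c) z = F (tperm b c) z.
Proof.
move=> az bz cz ac bc.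
have -> : tperm a c = (tperm a b * tperm b c * tperm a b)%g.
  have := tpermJ b c (tperm a b); rewrite /conjg tpermV tpermR tpermD //.
  by move=> <-; rewrite mulgA.
rewrite hcoc tpermV tpermD // hcoc tpermV tpermD //.
by rewrite mulrAC -expr2 sq1 ?mul1r.
Qed.
End Sq.
Lemma Dq_part p q (p0 : (0 < p)%N) : prime q -> odd q -> H1_trivial (@Dq p q).
Proof.
move=> qp oq f [hM hc].
pose z : 'I_p := Ordinal p0.
have hd g : is_diag_mx (f g) by case: (hM g).
have hnz g i : f g i i != 0.
  by case: (hM g) => _ [k hk]; exact: (nz_of_pow (prime_gt0 qp) (hk i)).
have Fent := coc_entry hd hc.
have htr a b : a != z -> b != z -> f (tperm a b) z z = 1.
  move=> az bz; case: (hM (tperm a b)) => _ [k hk].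
  apply: (oddpow (sq1 Fent hnz az bz) _ (hk z)).
  by rewrite oddX oq orbT.
have [K hK] : exists K, forall j, f (tperm z j) z z ^+ (q ^ K) = 1.
  apply: exp_common => j; case: (hM (tperm z j)) => _ [k hk]; exists k; exact: hk.
exists (diag_mx (\row_j (1 * f (tperm z j) z z))).
  split; first exact: diag_mx_is_diag.
  by exists K => i; rewrite !mxE eqxx mulr1n mul1r hK.
move=> g; have := cob_main hd hc hnz htr (oner_neq0 _) g. by [].
Qed.

Lemma X2_part p : prime p -> (5 <= p)%N -> H1_trivial (@X2 p).
Proof.
move=> pp p5 f [hM hc].
have p0 : (0 < p)%N by apply: leq_trans p5.
have p1 : (1 < p)%N by apply: leq_trans p5.
have p2 : (2 < p)%N by apply: leq_trans p5.
have op : odd p.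
  case: (even_prime pp) => // p2e; by move: p5; rewrite p2e.
pose z : 'I_p := Ordinal p0.
pose a1 : 'I_p := Ordinal p1.
pose a2 : 'I_p := Ordinal p2.
have a1z : a1 != z by [].
have a2z : a2 != z by [].
have a12 : a1 != a2 by [].
have hd g : is_diag_mx (f g) by case: (hM g).
have hnz g i : f g i i != 0.
  by case: (hM g) => _ [_ [k hk]]; exact: (nz_of_pow (isT : (0 < 2)%N) (hk i)).
have Fent := coc_entry hd hc.
have F1f := F1 Fent hnz.
pose eps := f (tperm a1 a2) z z.
have e2 : eps ^+ 2 = 1.
  by have := sq1 Fent hnz a1z a2z.
have psi a b : a != z -> b != z -> a != b -> f (tperm a b) z z = eps.
  move=> az bz ab; rewrite /eps.
  have CL := conjl Fent hnz.
  have [eb|ba2] := eqVneq b a2; first by subst b; apply: (CL z).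
  have [ea|aa2] := eqVneq a a2.
    by subst a; rewrite tpermC; apply: (CL z) => //; rewrite eq_sym.
  rewrite tpermC (CL z b a2 a) //; try by rewrite eq_sym.
  by rewrite tpermC; apply: (CL z).
have epsnz : eps != 0 by apply: hnz.
pose F' g i := eps ^+ odd_perm g * f g i i.
have eX (u v : bool) : eps ^+ (u (+) v) = eps ^+ u * eps ^+ v.
  by case: u; case: v; rewrite /= ?expr0 ?expr1 ?mulr1 ?mul1r // -expr2 e2.
have Fent' g h i : F' (g * h)%g i = F' g ((h^-1)%g i) * F' h i.
  by rewrite /F' Fent odd_permM eX mulrACA.
have hnz' g i : F' g i != 0 by rewrite mulf_neq0 // expf_neq0.
have htr' a b : a != z -> b != z -> F' (tperm a b) z = 1.
  move=> az bz; have [<-|ab] := eqVneq a b.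
    by rewrite /F' tperm1 odd_perm1 expr0 mul1r F1f.
  by rewrite /F' odd_tperm ab expr1 psi // -expr2 e2.
have CC := Call Fent' hnz' htr' (tperm a1 a2).
have e1 : eps = 1.
  apply: (oddpow e2 op).
  have hdet : \prod_i f (tperm a1 a2) i i = 1.
    case: (hM (tperm a1 a2)) => _ [hdt _]; apply: (etrans _ hdt); rewrite det_trig //; exact: is_diag_mx_is_trig.
  have : \prod_i (F' (tperm a1 a2) i * F' (tperm z i) z) =
         \prod_i F' (tperm z i) z.
    rewrite (eq_bigr _ (fun i _ => CC i)).
    rewrite (reindex_inj (@perm_inj _ (tperm a1 a2))); apply: eq_bigr => i _; by rewrite permK.
  rewrite big_split /=; set Q := \prod_i F' (tperm z i) z.
  have Qnz : Q != 0 by apply/prodf_neq0 => i _.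
  move/(congr1 (fun x => x / Q)); rewrite mulfK // divff //.
  rewrite /F' odd_tperm a12 expr1 big_split /= hdet mulr1 prodr_const card_ord.
  done.
have htr a b : a != z -> b != z -> f (tperm a b) z z = 1.
  move=> az bz; have [<-|ab] := eqVneq a b; first by rewrite tperm1 F1f.
  by rewrite psi.
pose y j := f (tperm z j) z z.
have [K hK] : exists K, forall j, y j ^+ (2 ^ K) = 1.
  apply: exp_common => j; case: (hM (tperm z j)) => _ [_ [k hk]]; exists k; exact: hk.
pose P := \prod_j y j.
have PK : P ^+ (2 ^ K) = 1 by rewrite /P -prodrXl big1.
have [a _ ha] := Bezoutl p (expn_gt0 2 K).
have cop : coprime (2 ^ K) p by rewrite coprimeXl // coprime2n.
move: ha; rewrite (eqP cop) => /dvdnP [w hw].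
pose c := P ^+ a.
have cK : c ^+ (2 ^ K) = 1 by rewrite /c -exprM mulnC exprM PK expr1n.
have cnz : c != 0 by apply: (nz_of_pow (isT : (0 < 2)%N) cK).
exists (diag_mx (\row_j (c * f (tperm z j) z z))).
  split; first exact: diag_mx_is_diag.
  split.
    rewrite det_diag (eq_bigr (fun j => c * y j)); last by move=> j _; rewrite mxE.
    rewrite big_split /= prodr_const card_ord -/P /c -exprM -exprSr -addn1 addnC hw.
    by rewrite mulnC exprM PK expr1n.
  by exists K => i; rewrite !mxE eqxx mulr1n exprMn cK hK mulr1.
move=> g; by have := cob_main hd hc hnz htr cnz g.
Qed.

Lemma lemma7p3' (p : nat) (hp : prime p) (hp5 : (5 <= p)%N) :
  @H1_trivial p (@X2 p) /\
  (forall q : nat, prime q -> odd q -> @H1_trivial p (@Dq p q)).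
Proof.
split; first exact: X2_part.
by move=> q qp oq; apply: Dq_part => //; apply: leq_trans hp5.
Qed.

Local Close Scope ring_scope.

Theorem lemma7p3 (p : nat) (hp : prime p) (hp5 : 5 <= p) :
  @H1_trivial p (@X2 p) /\
  (forall q : nat, prime q -> odd q -> @H1_trivial p (@Dq p q)).
Proof. exact: lemma7p3'. Qed.
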